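(* Let $\mathcal{X}\subset\mathbb{R}^p$, $\mathcal{Y}\subset\mathbb{R}^q$ be closed convex sets with $\mathcal{Z}=\mathcal{X}\times\mathcal{Y}$ compact and $\max_{\mathbf{z},\mathbf{z}'\in\mathcal{Z}}\|\mathbf{z}-\mathbf{z}'\|\le D$, let $f:\mathcal{X}\times\mathcal{Y}\to\mathbb{R}$ be continuous, and let $F(\mathbf{x},\mathbf{y})=\partial_xf(\mathbf{x},\mathbf{y})\times\partial_y[-f(\mathbf{x},\mathbf{y})]$ be $\rho$-weakly monotone ($\rho>0$), single-valued and $L$-Lipschitz continuous on $\mathcal{Z}$, with $\mathrm{MVI}(F,\mathcal{Z})$ having a solution. Run the inexact proximal point method with $\gamma=\frac1{2\rho}$, $\theta_k=(k+1)^\alpha$ ($\alpha\ge1$), and $K=\frac{16\rho^2D^2(\alpha+1)}{\epsilon^2}$ stages: from $\mathbf{z}_0\in\mathcal{Z}$, for $k=0,\dots,K-1$, with $F_k(\mathbf{z})=F(\mathbf{z})+\gamma^{-1}(\mathbf{z}-\mathbf{z}_k)$, let $\mathbf{z}_{k+1}=\mathbf{z}^{(T_k)}$ where $\mathbf{z}^{(0)}=\mathbf{z}_k$ and $\mathbf{z}^{(t+1)}=\mathrm{Proj}_{\mathcal{Z}}(\mathbf{z}^{(t)}-\eta_kF_k(\mathbf{z}^{(t)}))$ with $\eta_k=\frac{\rho}{2(L+2\rho)^2}$ and $T_k=1+\frac{4(L+2\rho)^2}{\rho^2}\log\big(\frac{8(L+2\rho)^2(k+1)}{\rho^2}\big)$.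 Output $\mathbf{z}_\tau$ with $\mathrm{Prob}(\tau=k)=\theta_k/\sum_{l=0}^{K-1}\theta_l$ and let $\bar{\mathbf{z}}_\tau=(\bar{\mathbf{u}}_\tau,\bar{\mathbf{v}}_\tau)$ be the solution of $\mathrm{SVI}(F^\gamma_{\mathbf{z}_\tau},\mathcal{Z})$ with $F^\gamma_{\mathbf{w}}(\mathbf{z})=F(\mathbf{z})+\gamma^{-1}(\mathbf{z}-\mathbf{w})$. Then $$\mathbb{E}\|\mathbf{z}_\tau-\bar{\mathbf{z}}_\tau\|^2\le\gamma^2\epsilon^2,\qquad\mathbb{E}\big[\mathrm{dist}^2\big(0,\partial(f(\bar{\mathbf{u}}_\tau,\bar{\mathbf{v}}_\tau)+1_{\mathcal{Z}}(\bar{\mathbf{u}}_\tau,\bar{\mathbf{v}}_\tau))\big)\big]\le\epsilon^2,$$ and the total iteration complexity $\sum_{k<K}T_k$ is $O\big(\log(\frac1\epsilon)\frac{L^2}{\epsilon^2}\big)$.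
   Context: $\partial$ is the Fréchet subdifferential ($\partial h(\mathbf{x})=\{\boldsymbol{\zeta}:h(\mathbf{x}')\ge h(\mathbf{x})+\boldsymbol{\zeta}^\top(\mathbf{x}'-\mathbf{x})+o(\|\mathbf{x}'-\mathbf{x}\|)\}$), $\partial_x,\partial_y$ partial ones; $1_{\mathcal{S}}$ is the indicator of $\mathcal{S}$; $\partial(f+1_{\mathcal{Z}})(\mathbf{x},\mathbf{y}):=\partial_x[f(\mathbf{x},\mathbf{y})+1_{\mathcal{X}}(\mathbf{x})]\times\partial_y[-f(\mathbf{x},\mathbf{y})+1_{\mathcal{Y}}(\mathbf{y})]$; $\mathrm{dist}$ is Euclidean distance; $\mathrm{Proj}_{\mathcal{Z}}$ Euclidean projection. $F$ is $\rho$-weakly monotone if $\langle F(\mathbf{z})-F(\mathbf{z}'),\mathbf{z}-\mathbf{z}'\rangle\ge-\rho\|\mathbf{z}-\mathbf{z}'\|^2$. $\mathrm{MVI}(F,\mathcal{Z})$: find $\mathbf{z}_*\in\mathcal{Z}$ with $\langle F(\mathbf{z}),\mathbf{z}-\mathbf{z}_*\rangle\ge0$ for all $\mathbf{z}\in\mathcal{Z}$. $\mathrm{SVI}(G,\mathcal{Z})$: find $\mathbf{z}^*\in\mathcal{Z}$ with $\langle G(\mathbf{z}^* ),\mathbf{z}-\mathbf{z}^*\rangle\ge0$ for all $\mathbf{z}\in\mathcal{Z}$ (unique for $G=F^\gamma_{\mathbf{w}}$). *)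

(* Defs.v *)
From HB Require Import structures.
From mathcomp Require Import all_boot all_order all_algebra.
From mathcomp Require Import all_classical all_reals all_analysis.
Set Implicit Arguments. Unset Strict Implicit. Unset Printing Implicit Defensive.
Import Order.TTheory GRing.Theory Num.Theory.
Import numFieldNormedType.Exports.
Local Open Scope classical_set_scope.
Local Open Scope ring_scope.

Section Defs.
Variable R : realType.

Definition dotv n (u v : 'rV[R]_n) : R := \sum_(i < n) u 0 i * v 0 i.
Definition enorm n (u : 'rV[R]_n) : R := Num.sqrt (dotv u u).

(* Fréchet subdifferential of h + 1_S at x (empty when x \notin S):
   zeta such that h x' >= h x + <zeta, x' - x> + o(|x' - x|) for x' in S. *)
Definition fsub n (S : set 'rV[R]_n) (h : 'rV[R]_n -> R) (x : 'rV[R]_n) :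
    set 'rV[R]_n :=
  [set zeta | S x /\ forall e : R, 0 < e -> exists2 d : R, 0 < d &
      forall x', S x' -> enorm (x' - x) < d ->
        h x + dotv zeta (x' - x) - e * enorm (x' - x) <= h x'].

(* Euclidean projection onto Z (a nearest point; unique for closed convex Z) *)
Definition proj n (Z : set 'rV[R]_n) (z : 'rV[R]_n) : 'rV[R]_n :=
  xget z [set w | Z w /\ forall w', Z w' -> enorm (z - w) <= enorm (z - w')].

(* squared distance from 0 to a set, +oo for the empty set *)
Definition dist2_0 n (S : set 'rV[R]_n) : \bar R :=
  ereal_inf [set ((enorm zeta) ^+ 2)%:E | zeta in S].

Definition ceiln (x : R) : nat := `|Num.ceil x|%N.

Definition inner_pg n (Z : set 'rV[R]_n) (F : 'rV[R]_n -> 'rV[R]_n)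
  (gamma eta : R) (T : nat) (w : 'rV[R]_n) : 'rV[R]_n :=
  iter T (fun z => proj Z (z - eta *: (F z + gamma^-1 *: (z - w)))) w.

Fixpoint ipp n (Z : set 'rV[R]_n) (F : 'rV[R]_n -> 'rV[R]_n)
  (gamma : R) (eta : nat -> R) (T : nat -> nat) (z0 : 'rV[R]_n) (k : nat)
  : 'rV[R]_n :=
  match k with
  | 0 => z0
  | k'.+1 => inner_pg Z F gamma (eta k') (T k') (ipp Z F gamma eta T z0 k')
  end.

Definition svi n (Z : set 'rV[R]_n) (G : 'rV[R]_n -> 'rV[R]_n) (z : 'rV[R]_n) :=
  Z z /\ forall z', Z z' -> 0 <= dotv (G z) (z' - z).

End Defs.

(* Main.v *)
Require Import Defs.
From HB Require Import structures.
From mathcomp Require Import all_boot all_order all_algebra.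
From mathcomp Require Import all_classical all_reals all_analysis.
From mathcomp Require Import ring lra.
Import Order.TTheory GRing.Theory Num.Theory.
Import numFieldNormedType.Exports.
Local Open Scope classical_set_scope.
Local Open Scope ring_scope.
Set Implicit Arguments. Unset Strict Implicit. Unset Printing Implicit Defensive.
Section Vec.
Variable R : realType.
Variable n : nat.
Implicit Types u v w x y : 'rV[R]_n.

Lemma dotvC u v : dotv u v = dotv v u.
Proof. by apply: eq_bigr => i _; rewrite mulrC. Qed.
Lemma dotvDl u v w : dotv (u + v) w = dotv u w + dotv v w.
Proof. by rewrite /dotv -big_split; apply: eq_bigr => i _; rewrite !mxE mulrDl. Qed.
Lemma dotvDr u v w : dotv w (u + v) = dotv w u + dotv w v.
Proof. by rewrite dotvC dotvDl !(dotvC w). Qed.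
Lemma dotvZl a u v : dotv (a *: u) v = a * dotv u v.
Proof. by rewrite /dotv mulr_sumr; apply: eq_bigr => i _; rewrite !mxE mulrA. Qed.
Lemma dotvZr a u v : dotv v (a *: u) = a * dotv v u.
Proof. by rewrite dotvC dotvZl dotvC. Qed.
Lemma dotvNl u v : dotv (- u) v = - dotv u v.
Proof. by rewrite -scaleN1r dotvZl mulN1r. Qed.
Lemma dotvNr u v : dotv v (- u) = - dotv v u.
Proof. by rewrite dotvC dotvNl dotvC. Qed.
Lemma dotvBl u v w : dotv (u - v) w = dotv u w - dotv v w.
Proof. by rewrite dotvDl dotvNl. Qed.
Lemma dotvBr u v w : dotv w (u - v) = dotv w u - dotv w v.
Proof. by rewrite dotvDr dotvNr. Qed.
Lemma dotv0l u : dotv 0 u = 0.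
Proof. by rewrite /dotv big1 // => i _; rewrite mxE mul0r. Qed.
Lemma dotvv_ge0 u : 0 <= dotv u u.
Proof. by apply: sumr_ge0 => i _; rewrite -expr2 sqr_ge0. Qed.
Lemma dotvv_eq0 u : dotv u u = 0 -> u = 0.
Proof.
move=> h; apply/rowP => i; rewrite mxE.
have := @psumr_eq0P _ _ xpredT (fun j => u 0 j * u 0 j).
move=> /(_ (fun j _ => (le_trans (sqr_ge0 (u 0 j)) (le_refl _)))).
move=> /(_ h i isT) /eqP; rewrite -expr2 sqrf_eq0 => /eqP //.
Qed.
Lemma enorm_ge0 u : 0 <= enorm u.
Proof. exact: sqrtr_ge0. Qed.
Lemma enorm_sq u : enorm u ^+ 2 = dotv u u.
Proof. by rewrite /enorm sqr_sqrtr // dotvv_ge0. Qed.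
Lemma dotv_expand u v : dotv (u + v) (u + v) = dotv u u + 2 * dotv u v + dotv v v.
Proof. by rewrite !dotvDl !dotvDr (dotvC v u); ring. Qed.
Lemma dotv_expandB u v : dotv (u - v) (u - v) = dotv u u - 2 * dotv u v + dotv v v.
Proof. by rewrite dotv_expand dotvNr dotvNl dotvNr opprK; ring. Qed.
Lemma polar u v (s : R) : 0 < s -> 2 * dotv u v <= s * dotv u u + s^-1 * dotv v v.
Proof.
move=> s0.
have := dotvv_ge0 (s *: u - v).
rewrite dotv_expandB !dotvZl !dotvZr => h.
have : 0 <= s^-1 * (s * (s * dotv u u) - 2 * (s * dotv u v) + dotv v v).
  by rewrite mulr_ge0 // invr_ge0 ltW.
rewrite !mulrDr mulrN !mulrA mulVf ?gt_eqF // !mul1r.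
have -> : s^-1 * 2 * s = 2 by rewrite mulrC mulrA mulrV ?unitfE ?gt_eqF // mul1r.
move=> h2; lra.
Qed.
Lemma CS u v : dotv u v ^+ 2 <= dotv u u * dotv v v.
Proof.
have [v0|vn0] := eqVneq (dotv v v) 0.
  by rewrite (dotvv_eq0 v0) dotvC dotv0l expr0n /= dotv0l mulr0.
have vp : 0 < dotv v v by rewrite lt_neqAle eq_sym vn0 dotvv_ge0.
have := dotvv_ge0 (dotv v v *: u - dotv u v *: v).
rewrite dotv_expandB !dotvZl !dotvZr => h.
have : 0 <= dotv v v * (dotv u u * dotv v v - dotv u v ^+ 2) by rewrite -[X in _ <= X](addr0) ; lra.
by rewrite pmulr_rge0 // subr_ge0.
Qed.
Lemma dotv_le u v : dotv u v <= enorm u * enorm v.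
Proof.
have h := CS u v.
have : `|dotv u v| <= enorm u * enorm v.
  rewrite -(ler_pXn2r (n := 2)) ?nnegrE ?normr_ge0 ?mulr_ge0 ?enorm_ge0 //.
  by rewrite exprMn !enorm_sq real_normK // num_real.
by apply: le_trans; rewrite ler_norm.
Qed.
Lemma enormD u v : enorm (u + v) <= enorm u + enorm v.
Proof.
rewrite -(ler_pXn2r (n := 2)) ?nnegrE ?addr_ge0 ?enorm_ge0 //.
rewrite enorm_sq dotv_expand sqrrD !enorm_sq.
have := dotv_le u v; lra.
Qed.
Lemma enormZ a u : enorm (a *: u) = `|a| * enorm u.
Proof.
rewrite /enorm dotvZl dotvZr mulrA -expr2 sqrtrM ?sqr_ge0 //.
by rewrite sqrtr_sqr.
Qed.
Lemma enormN u : enorm (- u) = enorm u.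
Proof. by rewrite -scaleN1r enormZ normrN normr1 mul1r. Qed.
Lemma enormB u v : enorm (u - v) = enorm (v - u).
Proof. by rewrite -enormN opprB. Qed.
Lemma enorm_le_sq u v : enorm u <= enorm v -> dotv u u <= dotv v v.
Proof. by move=> h; rewrite -!enorm_sq lerXn2r // nnegrE enorm_ge0. Qed.
Lemma sq_le_enorm u v : dotv u u <= dotv v v -> enorm u <= enorm v.
Proof. by move=> h; rewrite /enorm ler_sqrt // dotvv_ge0. Qed.
Lemma enorm3 (x x' y y' : 'rV[R]_n) : enorm (x - y) <= enorm (x - x') + enorm (x' - y') + enorm (y' - y).
Proof.
have -> : x - y = (x - x') + ((x' - y') + (y' - y)) by apply/rowP => i; rewrite !mxE; ring.
apply: (le_trans (enormD _ _)); rewrite -[X in _ <= X]addrA; apply: lerD; [exact: lexx | exact: enormD].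
Qed.
End Vec.
Section Lip.
Variable R : realType.
Variable n : nat.

Lemma coord_le_mx (u : 'rV[R]_n) i : `|u 0 i| <= `|u|.
Proof.
have -> : `|u| = mx_norm u by [].
rewrite mx_normrE.
exact: (le_bigmax (0 : R) (fun ij : 'I_1 * 'I_n => `|u ij.1 ij.2|) (0, i)).
Qed.

Lemma enorm_le_mx (u : 'rV[R]_n) : enorm u <= n%:R * `|u|.
Proof.
have -> : n%:R * `|u| = Num.sqrt ((n%:R * `|u|) ^+ 2).
  by rewrite sqrtr_sqr ger0_norm // mulr_ge0 ?ler0n ?normr_ge0.
rewrite /enorm ler_sqrt ?sqr_ge0 // /dotv.
apply: (@le_trans _ _ (\sum_(i < n) `|u|^+2)).
  apply: ler_sum => i _; rewrite -expr2 -real_normK ?num_real //.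
  by rewrite lerXn2r ?nnegrE ?normr_ge0 // coord_le_mx.
rewrite sumr_const card_ord -[`|u| ^+ 2 *+ n]mulr_natl exprMn.
apply: ler_wpM2r; first by rewrite sqr_ge0.
rewrite -natrX ler_nat; case: (n) => // m.
by rewrite expnS leq_pmulr // expn_gt0.
Qed.

Lemma lip_within (A : set 'rV[R]_n) (g : 'rV[R]_n -> R) (C : R) :
  (forall x y, A x -> A y -> `|g x - g y| <= C * enorm (x - y)) ->
  {within A, continuous g}.
Proof.
move=> hg; apply/subspace_continuousP => x Ax.
apply/cvgrPdist_lt => e e0.
have C1 : 0 < `|C| + 1 by rewrite ltr_pwDr ?normr_ge0.
have n1 : 0 < n%:R + 1 :> R by rewrite ltr_pwDr ?ler0n.
have d0 : 0 < e / ((`|C| + 1) * (n%:R + 1)) by rewrite divr_gt0 ?mulr_gt0.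
have h := @cvgr_dist_lt _ _ _ (nbhs x) _ id x (@cvg_id _ _) _ d0.
rewrite near_withinE; near=> y => Ay.
have hy : `|x - y| < e / ((`|C| + 1) * (n%:R + 1)) by near: y; exact: h.
apply: (le_lt_trans (hg x y Ax Ay)).
apply: (le_lt_trans (ler_norm _)).
rewrite normrM.
apply: (@le_lt_trans _ _ ((`|C| + 1) * ((n%:R + 1) * `|x - y|))).
  apply: ler_pM; rewrite ?normr_ge0 ?lerDl ?ler01 //.
  rewrite ger0_norm ?enorm_ge0 //.
  apply: (le_trans (enorm_le_mx _)); apply: ler_wpM2r; rewrite ?normr_ge0 //.
  by rewrite lerDl ler01.
rewrite mulrA -ltr_pdivlMl ?mulr_gt0 // mulrC.
by move: hy; rewrite mulrC.
Unshelve. all: by end_near.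
Qed.
End Lip.
Section Proj.
Variable R : realType.
Variable n : nat.
Variable Z : set 'rV[R]_n.
Hypothesis Zne : exists z, Z z.
Hypothesis cZ : compact Z.
Hypothesis cvx : forall x y (t : R), Z x -> Z y -> 0 <= t -> t <= 1 ->
  Z (t *: x + (1 - t) *: y).

Lemma enorm_lip (x a b : 'rV[R]_n) : `|enorm (x - a) - enorm (x - b)| <= 1 * enorm (a - b).
Proof.
rewrite mul1r ler_norml; apply/andP; split.
  have := enormD (x - a) (a - b).
  have -> : x - a + (a - b) = x - b by apply/rowP => i; rewrite !mxE; ring.
  lra.
have := enormD (x - b) (b - a).
have -> : x - b + (b - a) = x - a by apply/rowP => i; rewrite !mxE; ring.
rewrite (enormB b a); lra.
Qed.

Lemma proj_in (x : 'rV[R]_n) : Z (Defs.proj Z x) /\ forall w', Z w' -> enorm (x - Defs.proj Z x) <= enorm (x - w').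
Proof.
rewrite /Defs.proj.
apply: (@xgetPex _ x [set w | Z w /\ forall w', Z w' -> enorm (x - w) <= enorm (x - w')]).
have Z0 : Z !=set0 by case: Zne => z hz; exists z.
have cf : {within Z, continuous (fun w => enorm (x - w))}.
  by apply: (@lip_within _ _ _ _ 1) => a b _ _; exact: enorm_lip.
have [c cZc hc] := EVT_min_rV Z0 cZ cf.
exists c; split; first by rewrite -in_setE.
by move=> w' Zw'; apply: hc; rewrite in_setE.
Qed.

Lemma proj_inZ (x : 'rV[R]_n) : Z (Defs.proj Z x).
Proof. by case: (proj_in x). Qed.

Lemma proj_vi (x w' : 'rV[R]_n) : Z w' -> dotv (x - Defs.proj Z x) (w' - Defs.proj Z x) <= 0.
Proof.
move=> Zw'.
set p := Defs.proj Z x; set r := x - p; set d := w' - p.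
have [Zp hp] := proj_in x; rewrite -/p in Zp hp.
have key : forall t : R, 0 < t -> t <= 1 -> 2 * dotv r d <= t * dotv d d.
  move=> t t0 t1.
  have := hp _ (cvx Zw' Zp (ltW t0) t1) => /enorm_le_sq.
  have -> : x - (t *: w' + (1 - t) *: p) = r - t *: d.
    by apply/rowP => i; rewrite !mxE; ring.
  rewrite -/r [dotv (r - _) _]dotv_expandB !dotvZl !dotvZr => h.
  have : t * (2 * dotv r d) <= t * (t * dotv d d) by lra.
  by rewrite ler_pM2l.
rewrite leNgt; apply/negP => cpos.
have dd := dotvv_ge0 d.
have den : 0 < dotv d d + dotv r d by lra.
have t0 : 0 < dotv r d / (dotv d d + dotv r d) by rewrite divr_gt0.
have t1 : dotv r d / (dotv d d + dotv r d) <= 1 by rewrite ler_pdivrMr // mul1r; lra.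
have := key _ t0 t1.
have : dotv r d / (dotv d d + dotv r d) * dotv d d <= dotv r d.
  rewrite mulrAC ler_pdivrMr // ler_pM2l //; lra.
lra.
Qed.

Lemma proj_unique (x w : 'rV[R]_n) : Z w -> (forall w', Z w' -> dotv (x - w) (w' - w) <= 0) ->
  Defs.proj Z x = w.
Proof.
move=> Zw hw.
set p := Defs.proj Z x.
have h1 := proj_vi x Zw; rewrite -/p in h1.
have h2 := hw _ (proj_inZ x); rewrite -/p in h2.
have e : dotv (x - p) (w - p) + dotv (x - w) (p - w) = dotv (w - p) (w - p).
  have -> : p - w = - (w - p) by rewrite opprB.
  by rewrite dotvNr -dotvBl; congr dotv; apply/rowP => i; rewrite !mxE; ring.
have : dotv (w - p) (w - p) = 0 by apply/eqP; rewrite eq_le dotvv_ge0 andbT; lra.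
move/dotvv_eq0 => /eqP; rewrite subr_eq0 => /eqP ->. by [].
Qed.

Lemma proj_nonexp (a b : 'rV[R]_n) : dotv (Defs.proj Z a - Defs.proj Z b) (Defs.proj Z a - Defs.proj Z b) <= dotv (a - b) (a - b).
Proof.
set pa := Defs.proj Z a; set pb := Defs.proj Z b.
have h1 := proj_vi a (proj_inZ b); rewrite -/pa -/pb in h1.
have h2 := proj_vi b (proj_inZ a); rewrite -/pa -/pb in h2.
have e : dotv (a - pa) (pb - pa) + dotv (b - pb) (pa - pb) = dotv ((pa - pb) - (a - b)) (pa - pb).
  have -> : pb - pa = - (pa - pb) by rewrite opprB.
  by rewrite dotvNr addrC -dotvBl; congr dotv; apply/rowP => i; rewrite !mxE; ring.
rewrite [in RHS]dotvBl in e.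
have := polar (a - b) (pa - pb) ltr01.
rewrite invr1 !mul1r => hh.
lra.
Qed.
End Proj.
Section Fixed.
Variable R : realType.
Variable n : nat.
Variable Z : set 'rV[R]_n.
Hypothesis Zne : exists z, Z z.
Hypothesis cZ : compact Z.
Hypothesis cvx : forall x y (t : R), Z x -> Z y -> 0 <= t -> t <= 1 ->
  Z (t *: x + (1 - t) *: y).
Variable G : 'rV[R]_n -> 'rV[R]_n.
Variables mu Lg : R.
Hypothesis mu0 : 0 < mu.
Hypothesis muL : mu <= Lg.
Hypothesis smon : forall z z', Z z -> Z z' ->
  mu * dotv (z - z') (z - z') <= dotv (G z - G z') (z - z').
Hypothesis lip : forall z z', Z z -> Z z' ->
  dotv (G z - G z') (G z - G z') <= Lg ^+ 2 * dotv (z - z') (z - z').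

Let eta := mu / (2 * Lg ^+ 2).
Let Phi z := Defs.proj Z (z - eta *: G z).
Definition cfac := 1 - 3 * mu ^+ 2 / (4 * Lg ^+ 2).

Let Lg0 : 0 < Lg. Proof. exact: lt_le_trans muL. Qed.
Let eta0 : 0 < eta. Proof. by rewrite /eta divr_gt0 // mulr_gt0 // exprn_gt0. Qed.

Lemma cfac_ge0 : 0 <= cfac.
Proof.
rewrite /cfac subr_ge0 ler_pdivrMr ?mulr_gt0 ?exprn_gt0 // mul1r.
have : mu ^+ 2 <= Lg ^+ 2 by rewrite lerXn2r // nnegrE ltW.
have := sqr_ge0 mu; lra.
Qed.
Lemma cfac_lt1 : cfac < 1.
Proof.
rewrite /cfac ltrBlDr ltrDl divr_gt0 // ?mulr_gt0 ?exprn_gt0 //.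
Qed.

Lemma contr z z' : Z z -> Z z' ->
  dotv (Phi z - Phi z') (Phi z - Phi z') <= cfac * dotv (z - z') (z - z').
Proof.
move=> Zz Zz'.
apply: (le_trans (proj_nonexp Zne cZ cvx _ _)).
have -> : z - eta *: G z - (z' - eta *: G z') = (z - z') - eta *: (G z - G z').
  by apply/rowP => i; rewrite !mxE; ring.
rewrite [dotv (_ - eta *: _) _]dotv_expandB !dotvZl !dotvZr (dotvC (z - z')).
have h1 := smon Zz Zz'; have h2 := lip Zz Zz'.
set N := dotv (z - z') (z - z') in h1 h2 *.
have e1 : eta * (eta * dotv (G z - G z') (G z - G z')) <= eta * (eta * (Lg ^+ 2 * N)).
  by rewrite !ler_wpM2l // ltW.
have e2 : eta * (mu * N) <= eta * dotv (G z - G z') (z - z') by rewrite ler_wpM2l // ltW.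
have -> : cfac * N = N - 2 * (eta * (mu * N)) + eta * (eta * (Lg ^+ 2 * N)).
  rewrite /cfac /eta; field; rewrite gt_eqF // exprn_gt0 //.
lra.
Qed.

Lemma contr1 z z' : Z z -> Z z' -> enorm (Phi z - Phi z') <= enorm (z - z').
Proof.
move=> Zz Zz'; apply: sq_le_enorm; apply: (le_trans (contr Zz Zz')).
rewrite ler_piMl ?dotvv_ge0 ?cfac_ge0 //; exact: ltW cfac_lt1.
Qed.

Lemma lip_aux (A B P Q U W : R) : P <= A + Q + U -> Q <= B + P + W -> U <= B -> W <= A -> B = A ->
  `|P - Q| <= 2 * A.
Proof. move=> *; rewrite ler_norml; apply/andP; split; lra. Qed.

Lemma fix_aux (N1 N2 c : R) : N1 <= N2 -> N2 <= c * N1 -> c < 1 -> 0 <= N1 -> N1 = 0.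
Proof.
move=> h1 h2 c1 h0; apply/eqP; rewrite eq_le h0 andbT.
have : (1 - c) * N1 <= 0 by rewrite mulrBl mul1r; lra.
by rewrite pmulr_rle0 // subr_gt0.
Qed.

Lemma fixed_exists : exists2 zb, Z zb & Phi zb = zb.
Proof.
have Z0 : Z !=set0 by case: Zne => z hz; exists z.
pose g z := enorm (z - Phi z).
have cf : {within Z, continuous g}.
  apply: (@lip_within _ _ _ _ 2) => a b Za Zb.
  have t1 := enorm3 a b (Phi a) (Phi b).
  have t2 := enorm3 b a (Phi b) (Phi a).
  have c1 := contr1 Zb Za. have c2 := contr1 Za Zb.
  have e1 := enormB b a.
  exact: (lip_aux t1 t2 c1 c2 e1).
have [zm Zzm hm] := EVT_min_rV Z0 cZ cf.
rewrite in_setE in Zzm.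
exists zm => //.
have ZP : Z (Phi zm) by exact: proj_inZ Zne cZ _.
have h1 : g zm <= g (Phi zm) by apply: hm; rewrite in_setE.
have h2 := contr Zzm ZP.
have h3 := enorm_le_sq h1.
have h5 := fix_aux h3 h2 cfac_lt1 (dotvv_ge0 _).
by move/dotvv_eq0: h5 => /eqP; rewrite subr_eq0 => /eqP <-.
Qed.

Lemma svi_fixed w : svi Z G w <-> (Z w /\ Phi w = w).
Proof.
split.
  move=> [Zw hw]; split => //; apply: (proj_unique Zne cZ cvx) => // w' Zw'.
  have -> : w - eta *: G w - w = - (eta *: G w) by apply/rowP => i; rewrite !mxE; ring.
  rewrite dotvNl dotvZl oppr_le0 mulr_ge0 ?hw //; exact: ltW.
move=> [Zw hw]; split => // w' Zw'.
have := proj_vi Zne cZ cvx (w - eta *: G w) Zw'.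
rewrite -/(Phi w) hw.
have -> : w - eta *: G w - w = - (eta *: G w) by apply/rowP => i; rewrite !mxE; ring.
by rewrite dotvNl dotvZl oppr_le0 pmulr_rge0.
Qed.

Lemma iter_in t z : Z z -> Z (iter t Phi z).
Proof. by case: t => [|t] //= _; exact: proj_inZ Zne cZ _. Qed.

Lemma iter_contr t z zb : Z z -> Z zb -> Phi zb = zb ->
  dotv (iter t Phi z - zb) (iter t Phi z - zb) <= cfac ^+ t * dotv (z - zb) (z - zb).
Proof.
move=> Zz Zb fb; elim: t => [|t IH]; first by rewrite expr0 mul1r.
rewrite iterS -[in X in X <= _]fb.
apply: (le_trans (contr (iter_in t Zz) Zb)).
by rewrite exprS -mulrA ler_wpM2l // cfac_ge0.
Qed.
End Fixed.
Section RealAux.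
Variable R : realType.

Lemma abel (th A : nat -> R) (D2 : R) :
  (forall k, 0 <= th k) -> (forall k, th k <= th k.+1) ->
  (forall k, 0 <= A k <= D2) ->
  forall K, \sum_(k < K.+1) th k * (A k - A k.+1) <= th K * (D2 - A K.+1).
Proof.
move=> th0 thi hA; elim => [|K IH].
  rewrite big_ord1 ler_wpM2l //.
  by have /andP[_ h] := hA 0%N; lra.
rewrite big_ord_recr /=.
apply: (le_trans (lerD IH (lexx _))).
have h1 : th K * (D2 - A K.+1) <= th K.+1 * (D2 - A K.+1).
  by rewrite ler_wpM2r // subr_ge0; case/andP: (hA K.+1).
apply: (le_trans (lerD h1 (lexx _))).
rewrite -mulrDr; apply: ler_wpM2l => //; lra.
Qed.

Lemma abel0 (th A : nat -> R) (D2 : R) :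
  (forall k, 0 <= th k) -> (forall k, th k <= th k.+1) ->
  (forall k, 0 <= A k <= D2) ->
  forall K, \sum_(k < K) th k * (A k - A k.+1) <= (if K is K'.+1 then th K' else 0) * D2.
Proof.
move=> th0 thi hA [|K]; first by rewrite big_ord0 mul0r.
apply: (le_trans (abel th0 thi hA K)); apply: ler_wpM2l => //.
by case/andP: (hA K.+1) => h _; lra.
Qed.

Lemma powR_step (al : R) (K : nat) : 1 <= al ->
  (K.+1%:R) `^ (al + 1) - (K%:R) `^ (al + 1) <= (al + 1) * (K.+1%:R) `^ al.
Proof.
move=> al1.
case: K => [|K].
  rewrite powR0 ?subr0; last by rewrite gt_eqF //; lra.
  rewrite !powR1 mulr1; lra.
have K0 : (0 : R) < K.+1%:R by rewrite ltr0n.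
have lt : (K.+1%:R : R) < K.+2%:R by rewrite ltr_nat.
have hd : forall x : R, x \in `]K.+1%:R, K.+2%:R[ ->
    is_derive x 1 (fun y : R => y `^ (al + 1)) ((al + 1) * x `^ (al + 1 - 1)).
  move=> x; rewrite in_itv /= => /andP[h _].
  exact: is_derive1_powR (lt_trans K0 h).
have hc : {within `[K.+1%:R, K.+2%:R], continuous (fun y : R => y `^ (al + 1))}.
  apply: derivable_within_continuous => x; rewrite in_itv /= => /andP[h _].
  apply: derivable_powR; rewrite in_itv /= andbT; exact: lt_le_trans K0 h.
have [c cin ->] := MVT lt hd hc.
move: cin; rewrite in_itv /= => /andP[c1 c2].
rewrite addrK.
have -> : (K.+2%:R : R) - K.+1%:R = 1 by rewrite -natrB // subSn // subnn.
rewrite mulr1; apply: ler_wpM2l; first by lra.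
apply: ge0_ler_powR; rewrite ?nnegrE.
- lra.
- exact: ltW (lt_trans K0 c1).
- by rewrite ler0n.
- exact: ltW.
Qed.

Lemma sum_powR_lb (al : R) (K : nat) : 1 <= al ->
  (K%:R) `^ (al + 1) <= (al + 1) * \sum_(k < K) (k.+1%:R) `^ al.
Proof.
move=> al1; elim: K => [|K IH].
  by rewrite big_ord0 mulr0 powR0 // gt_eqF //; lra.
rewrite big_ord_recr /= mulrDr.
have := powR_step K al1; lra.
Qed.

Lemma sum_pow_div (al : R) (K : nat) : 1 <= al ->
  \sum_(k < K) (k.+1%:R) `^ al / k.+1%:R <= (K%:R) `^ al.
Proof.
move=> al1.
have al0 : 0 < al by lra.
have e : forall x : R, 0 <= x -> x `^ al = x * x `^ (al - 1).
  by move=> x x0; rewrite mulr_powRB1.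
apply: (@le_trans _ _ (\sum_(k < K) (K%:R) `^ (al - 1))).
  apply: ler_sum => k _.
  rewrite e ?ler0n // mulrAC mulfV ?pnatr_eq0 // mul1r.
  apply: ge0_ler_powR; rewrite ?nnegrE ?ler0n ?ler_nat //; lra.
by rewrite sumr_const card_ord -[_ *+ K]mulr_natl -e ?ler0n.
Qed.
End RealAux.
Section Ceil.
Variable R : realType.
Lemma ceiln_ge (y : R) : 0 <= y -> y <= (ceiln y)%:R.
Proof.
move=> y0; rewrite /ceiln natr_absz ger0_norm; first exact: ceil_ge.
by rewrite ceil_ge0; lra.
Qed.
Lemma ceiln_le (y : R) : 0 <= y -> (ceiln y)%:R <= y + 1.
Proof.
move=> y0; rewrite /ceiln natr_absz ger0_norm; last by rewrite ceil_ge0; lra.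
have := ceilB1_lt y; rewrite intrD /= => h; lra.
Qed.

Lemma cT_bound (rho L : R) (k : nat) : 0 < rho -> 0 < L ->
  (1 - 3 * rho ^+ 2 / (4 * (L + 2 * rho) ^+ 2)) ^+
    (ceiln (1 + 4 * (L + 2 * rho) ^+ 2 / rho ^+ 2 *
        ln (8 * (L + 2 * rho) ^+ 2 * k.+1%:R / rho ^+ 2)))
  <= (32 * k.+1%:R)^-1.
Proof.
move=> r0 L0.
set Lg := L + 2 * rho.
have Lg0 : 0 < Lg by rewrite /Lg; lra.
have r2 : 0 < rho ^+ 2 by rewrite exprn_gt0.
have Lg2 : 0 < Lg ^+ 2 by rewrite exprn_gt0.
have rLg : 4 * rho ^+ 2 <= Lg ^+ 2.
  have -> : 4 * rho ^+ 2 = (2 * rho) ^+ 2 by ring.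
  by apply: lerXn2r; rewrite ?nnegrE /Lg; lra.
set x := 3 * rho ^+ 2 / (4 * Lg ^+ 2).
have x0 : 0 < x by rewrite /x divr_gt0 ?mulr_gt0 //; lra.
have x1 : x <= 1.
  by rewrite /x ler_pdivrMr ?mulr_gt0 // mul1r; lra.
set M := 8 * Lg ^+ 2 * k.+1%:R / rho ^+ 2.
have k1 : (1 : R) <= k.+1%:R by rewrite ler1n.
have M32 : 32 * k.+1%:R <= M.
  rewrite /M ler_pdivlMr //.
  have := ltW (lt_le_trans ltr01 k1).
  move: (k.+1%:R : R) rLg => kk rLg' kk0.
  have : kk * (4 * rho ^+ 2) <= kk * Lg ^+ 2 by rewrite ler_wpM2l.
  move: (rho ^+ 2) (Lg ^+ 2) => a b; lra.
have M1 : 1 <= M.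
  have : (32 : R) <= 32 * k.+1%:R by rewrite ler_peMr.
  lra.
have Mp : 0 < M by lra.
have lnM0 : 0 <= ln M by exact: ln_ge0.
set T := ceiln _.
have T1 : 4 * Lg ^+ 2 / rho ^+ 2 * ln M <= T%:R.
  apply: le_trans (ceiln_ge _); first by lra.
  by rewrite addr_ge0 // mulr_ge0 // divr_ge0 ?mulr_ge0 ?ltW.
apply: (@le_trans _ _ (expR (- x) ^+ T)).
  apply: lerXn2r; rewrite ?nnegrE ?expR_ge0 //; first by lra.
  by have := expR_ge1Dx (- x); lra.
rewrite -expRM_natr.
apply: (@le_trans _ _ (expR (- ln M))).
  rewrite ler_expR.
  have e : x * (4 * Lg ^+ 2 / rho ^+ 2 * ln M) = 3 * ln M.
    rewrite /x; field; apply/andP; split; rewrite gt_eqF //.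
  have : x * (4 * Lg ^+ 2 / rho ^+ 2 * ln M) <= x * T%:R by rewrite ler_wpM2l // ltW.
  rewrite e mulNr; lra.
rewrite expRN lnK ?posrE //.
by rewrite lef_pV2 ?posrE // mulr_gt0 // ltr0n.
Qed.
End Ceil.
Section Aux2.
Variable R : realType.
Variables p q : nat.
Implicit Types u v : 'rV[R]_(p + q).

Lemma lsubB u v : lsubmx (u - v) = lsubmx u - lsubmx v.
Proof. by apply/rowP => i; rewrite !mxE. Qed.
Lemma rsubB u v : rsubmx (u - v) = rsubmx u - rsubmx v.
Proof. by apply/rowP => i; rewrite !mxE. Qed.
Lemma lsubD u v : lsubmx (u + v) = lsubmx u + lsubmx v.
Proof. by apply/rowP => i; rewrite !mxE. Qed.
Lemma rsubD u v : rsubmx (u + v) = rsubmx u + rsubmx v.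
Proof. by apply/rowP => i; rewrite !mxE. Qed.
Lemma lsubZ (a : R) u : lsubmx (a *: u) = a *: lsubmx u.
Proof. by apply/rowP => i; rewrite !mxE. Qed.
Lemma rsubZ (a : R) u : rsubmx (a *: u) = a *: rsubmx u.
Proof. by apply/rowP => i; rewrite !mxE. Qed.

Lemma dotv_split u v : dotv u v = dotv (lsubmx u) (lsubmx v) + dotv (rsubmx u) (rsubmx v).
Proof.
rewrite /dotv big_split_ord; congr (_ + _); apply: eq_bigr => i _; by rewrite !mxE.
Qed.
End Aux2.

Section Aux3.
Variable R : realType.

Lemma fsub_normal m (S : set 'rV[R]_m) (h : 'rV[R]_m -> R) u g0 g :
  S u -> fsub setT h u g0 -> (forall x', S x' -> 0 <= dotv g (x' - u)) ->
  fsub S h u (g0 - g).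
Proof.
move=> Su [_ hg0] hn; split => // e e0.
have [d d0 hd] := hg0 e e0; exists d => // x' Sx' hx.
have := hd x' I hx; rewrite dotvBl.
have := hn x' Sx'.
move: (dotv g0 (x' - u)) (dotv g (x' - u)) (h u) (h x') (e * enorm (x' - u)) => a b c d' f'.
lra.
Qed.

Lemma step_aux (a A A' B Nd P D2 kk : R) : 1 <= kk -> 0 <= Nd -> 0 <= B ->
  a + B <= A -> A' = Nd + P + B -> P <= 8 * kk * Nd + (8 * kk)^-1 * B ->
  Nd <= (32 * kk)^-1 * a -> B <= D2 -> 23 * a <= 32 * (A - A') + 4 * (D2 / kk).
Proof.
move=> k1 Nd0 B0 h1 h2 h3 h4 h5.
have k0 : 0 < kk by lra.
have i1 : kk * Nd <= a / 32.
  have : kk * Nd <= kk * ((32 * kk)^-1 * a) by rewrite ler_wpM2l // ltW.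
  suff -> : kk * ((32 * kk)^-1 * a) = a / 32 by [].
  by field; rewrite gt_eqF.
have i2 : Nd <= kk * Nd by rewrite ler_peMl.
have i3 : (8 * kk)^-1 * B <= (D2 / kk) / 8.
  have : (8 * kk)^-1 * B <= (8 * kk)^-1 * D2 by rewrite ler_wpM2l // invr_ge0 mulr_ge0 // ltW.
  suff -> : (8 * kk)^-1 * D2 = (D2 / kk) / 8 by [].
  by field; rewrite gt_eqF.
have e : 8 * kk * Nd = 8 * (kk * Nd) by rewrite mulrA.
rewrite e in h3.
move: (kk * Nd) (D2 / kk) ((8 * kk)^-1 * B) i1 i2 i3 h3 => x y z i1 i2 i3 h3.
lra.
Qed.

Lemma final_aux (S W Ka Kn D2 al eps rho : R) : 0 < W -> 0 < Kn -> 0 < Ka -> 0 < rho ->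
  0 < eps -> 0 <= D2 -> 0 < al + 1 ->
  23 * S <= 36 * (Ka * D2) -> Kn * Ka <= (al + 1) * W ->
  16 * rho ^+ 2 * D2 * (al + 1) / eps ^+ 2 <= Kn ->
  S / W <= (2 * rho)^-1 ^+ 2 * eps ^+ 2.
Proof.
move=> W0 Kn0 Ka0 r0 e0 D0 a0 hS hW hK.
have e2 : 0 < eps ^+ 2 by rewrite exprn_gt0.
have r2 : 0 < rho ^+ 2 by rewrite exprn_gt0.
rewrite ler_pdivrMr //.
have hK' : D2 * (al + 1) <= Kn * eps ^+ 2 / (16 * rho ^+ 2).
  rewrite ler_pdivlMr ?mulr_gt0 //.
  move: hK; rewrite ler_pdivrMr // => hK.
  have -> : D2 * (al + 1) * (16 * rho ^+ 2) = 16 * rho ^+ 2 * D2 * (al + 1) by ring.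
  exact: hK.
have hW' : Kn * Ka * (D2 * (al + 1)) <= (al + 1) * W * (Kn * eps ^+ 2 / (16 * rho ^+ 2)).
  apply: ler_pM => //; by rewrite ?mulr_ge0 // ltW.
have hS' : S <= 36 / 23 * (Ka * D2).
  have -> : 36 / 23 * (Ka * D2) = (36 * (Ka * D2)) / 23 by field.
  rewrite ler_pdivlMr //; lra.
have key : Ka * D2 <= W * eps ^+ 2 / (16 * rho ^+ 2).
  have : Kn * (al + 1) * (Ka * D2) <= Kn * (al + 1) * (W * eps ^+ 2 / (16 * rho ^+ 2)).
    have -> : Kn * (al + 1) * (Ka * D2) = Kn * Ka * (D2 * (al + 1)) by ring.
    have -> : Kn * (al + 1) * (W * eps ^+ 2 / (16 * rho ^+ 2)) =
      (al + 1) * W * (Kn * eps ^+ 2 / (16 * rho ^+ 2)) by field; rewrite gt_eqF.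
    exact: hW'.
  by rewrite ler_pM2l // mulr_gt0.
have -> : (2 * rho)^-1 ^+ 2 * eps ^+ 2 * W = 4 * (W * eps ^+ 2 / (16 * rho ^+ 2)).
  by field; rewrite gt_eqF.
have hx : 0 <= Ka * D2 by rewrite mulr_ge0 // ltW.
move: (Ka * D2) (W * eps ^+ 2 / (16 * rho ^+ 2)) hS' key hx => x y h1 h2 hx.
lra.
Qed.
End Aux3.
Section BigO.
Variable R : realType.

Lemma bigO_aux (rho L D al : R) : 0 < rho -> 0 < L -> 1 <= al ->
  (fun eps : R => (\sum_(k < ceiln (16 * rho ^+ 2 * D ^+ 2 * (al + 1) / eps ^+ 2))
      ceiln (1 + 4 * (L + 2 * rho) ^+ 2 / rho ^+ 2 *
                 ln (8 * (L + 2 * rho) ^+ 2 * k.+1%:R / rho ^+ 2)))%:R : R)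
  =O_ (at_right (0:R)) (fun eps : R => ln (eps^-1) * L ^+ 2 / eps ^+ 2).
Proof.
move=> r0 L0 al1.
set Lg := L + 2 * rho.
have Lg0 : 0 < Lg by rewrite /Lg; lra.
have r2 : 0 < rho ^+ 2 by rewrite exprn_gt0.
have L2 : 0 < L ^+ 2 by rewrite exprn_gt0.
have Lg2 : 0 < Lg ^+ 2 by rewrite exprn_gt0.
set c1 := 4 * Lg ^+ 2 / rho ^+ 2.
set c2 := 8 * Lg ^+ 2 / rho ^+ 2.
set c3 := 16 * rho ^+ 2 * D ^+ 2 * (al + 1).
have c10 : 0 <= c1 by rewrite /c1 divr_ge0 // ?mulr_ge0 // ltW.
have c20 : 0 < c2 by rewrite /c2 divr_gt0 // mulr_gt0.
have c30 : 0 <= c3.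
  rewrite /c3; apply: mulr_ge0; last lra.
  apply: mulr_ge0; last exact: sqr_ge0.
  apply: mulr_ge0; [lra | exact: ltW].
set B := c3 + 1.
have B0 : 0 < B by rewrite /B; lra.
set m := 1 + `|ln (c2 * B)|.
have m1 : 1 <= m by rewrite /m lerDl normr_ge0.
apply/eqO_exP; exists (B * (2 + 3 * c1) / L ^+ 2).
  by rewrite divr_gt0 // mulr_gt0 //; lra.
near=> eps.
have e0 : 0 < eps by near: eps; exact: nbhs_right_gt.
have em : eps <= expR (- m) by near: eps; apply: nbhs_right_le; exact: expR_gt0.
have ei0 : 0 < eps^-1 by rewrite invr_gt0.
set u := ln (eps^-1).
have um : m <= u.
  have : expR m <= eps^-1.
    by rewrite -[expR m]invrK lef_pV2 ?posrE ?invr_gt0 ?expR_gt0 // -expRN.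
  by rewrite -ler_ln ?posrE ?expR_gt0 // expRK.
have u1 : 1 <= u by lra.
have e1 : eps <= 1.
  apply: le_trans em _; rewrite -expR0 ler_expR; lra.
have ee : 1 <= eps^-1 ^+ 2.
  have ie : 1 <= eps^-1 by rewrite invf_ge1.
  by rewrite expr2; have := ler_pM ler01 ler01 ie ie; rewrite mul1r.
have e2 : 0 < eps ^+ 2 by rewrite exprn_gt0.
have eq2 : c3 / eps ^+ 2 = c3 * eps^-1 ^+ 2 by rewrite exprVn.
rewrite eq2.
set Kn := ceiln (c3 * eps^-1 ^+ 2).
have KnB : Kn%:R <= B * eps^-1 ^+ 2.
  apply: le_trans (ceiln_le _) _; first by rewrite mulr_ge0 ?sqr_ge0.
  rewrite /B mulrDl mul1r lerD2l //.
rewrite [X in _ <= _ * X]ger0_norm; last by rewrite !mulr_ge0 ?invr_ge0 ?sqr_ge0 //; lra.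
rewrite ger0_norm ?ler0n //.
have goalR : B * (2 + 3 * c1) / L ^+ 2 * (u * L ^+ 2 / eps ^+ 2) = B * eps^-1 ^+ 2 * ((2 + 3 * c1) * u).
  by rewrite exprVn; field; rewrite !gt_eqF.
rewrite goalR.
case: (posnP Kn) => [->|Kpos].
  by rewrite big_ord0 !mulr_ge0 // ?sqr_ge0 ?ltW //; lra.
have lnb : ln (c2 * Kn%:R) <= 3 * u.
  have h1 : ln (c2 * Kn%:R) <= ln (c2 * B * eps^-1 ^+ 2).
    rewrite ler_ln ?posrE ?mulr_gt0 ?ltr0n ?exprn_gt0 ?invr_gt0 //.
    by rewrite -mulrA ler_wpM2l // ltW.
  rewrite [ln (c2 * B * _)]lnM ?posrE ?mulr_gt0 ?exprn_gt0 ?invr_gt0 // in h1.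
  rewrite (lnXn 2 ei0) in h1.
  have : ln (c2 * B) <= m by rewrite /m; have := ler_norm (ln (c2 * B)); lra.
  move: h1; rewrite -/u mulr2n; lra.
rewrite natr_sum.
apply: (@le_trans _ _ (\sum_(k < Kn) ((2 + 3 * c1) * u))).
  apply: ler_sum => k _.
  apply: le_trans (ceiln_le _) _.
    apply: addr_ge0 => //; apply: mulr_ge0 => //; apply: ln_ge0.
    rewrite ler_pdivlMr // mul1r.
    have h4 : 4 * rho ^+ 2 <= Lg ^+ 2.
      have -> : 4 * rho ^+ 2 = (2 * rho) ^+ 2 by ring.
      by apply: lerXn2r; rewrite ?nnegrE /Lg; lra.
    have h8 : 8 * Lg ^+ 2 <= 8 * Lg ^+ 2 * k.+1%:R.
      by rewrite ler_peMr ?ler1n // mulr_ge0 // ltW.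
    move: h4 h8 r2; move: (Lg ^+ 2) (rho ^+ 2) (8 * Lg ^+ 2 * k.+1%:R) => a b c; lra.
  have hk : ln (8 * Lg ^+ 2 * k.+1%:R / rho ^+ 2) <= ln (c2 * Kn%:R).
    rewrite ler_ln ?posrE ?mulr_gt0 ?divr_gt0 ?ltr0n ?invr_gt0 ?exprn_gt0 //.
    have -> : 8 * Lg ^+ 2 * k.+1%:R / rho ^+ 2 = c2 * k.+1%:R by rewrite /c2; field; rewrite gt_eqF.
    apply: ler_wpM2l; [exact: ltW | by rewrite ler_nat ltn_ord].
  have : c1 * ln (8 * Lg ^+ 2 * k.+1%:R / rho ^+ 2) <= c1 * (3 * u).
    apply: ler_wpM2l => //; exact: le_trans hk lnb.
  move: (c1 * ln _) => x hx.
  have : c1 * (3 * u) <= 3 * c1 * u by rewrite mulrCA mulrA.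
  have : 2 <= 2 * u by lra.
  rewrite mulrDl; lra.
rewrite sumr_const card_ord -[_ *+ Kn]mulr_natl.
rewrite ler_wpM2r //; first by rewrite mulr_ge0 //; lra.
Unshelve. all: by end_near.
Qed.
End BigO.
Section Final.
Variable R : realType.

Lemma sum_combine (K : nat) (th a A : nat -> R) (D2 : R) :
  (forall k, 0 <= th k) ->
  (forall k, 23 * a k <= 32 * (A k - A k.+1) + 4 * (D2 / k.+1%:R)) ->
  23 * (\sum_(k < K) th k * a k) <=
    32 * (\sum_(k < K) th k * (A k - A k.+1)) + 4 * D2 * (\sum_(k < K) th k / k.+1%:R).
Proof.
move=> th0 hs; rewrite !mulr_sumr -big_split /=; apply: ler_sum => k _.
have h := ler_wpM2l (th0 k) (hs k).
have e1 : 23 * (th k * a k) = th k * (23 * a k) by ring.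
have e2 : th k * (32 * (A k - A k.+1) + 4 * (D2 / k.+1%:R)) =
  32 * (th k * (A k - A k.+1)) + 4 * D2 * (th k / k.+1%:R) by ring.
by rewrite e1 -e2.
Qed.

Lemma final2 (K : nat) (a A : nat -> R) (D2 al eps rho : R) :
  1 <= al -> 0 < rho -> 0 < eps -> 0 <= D2 ->
  (forall k, 0 <= A k <= D2) ->
  (forall k, 23 * a k <= 32 * (A k - A k.+1) + 4 * (D2 / k.+1%:R)) ->
  16 * rho ^+ 2 * D2 * (al + 1) / eps ^+ 2 <= K%:R ->
  \sum_(k < K) ((k.+1%:R) `^ al / \sum_(l < K) (l.+1%:R) `^ al) * a k
    <= (2 * rho)^-1 ^+ 2 * eps ^+ 2.
Proof.
move=> al1 r0 e0 D0 hA hs hK.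
set th := fun k : nat => (k.+1%:R : R) `^ al.
have th0 : forall k, 0 <= th k by move=> k; exact: powR_ge0.
have thi : forall k, th k <= th k.+1.
  move=> k; apply: ge0_ler_powR; rewrite ?nnegrE ?ler0n ?ler_nat //; lra.
case: K hK => [|K] hK.
  by rewrite big_ord0 mulr_ge0 // ?sqr_ge0 // exprn_ge0.
set W := \sum_(l < K.+1) th l.
have e : \sum_(k < K.+1) (th k / W) * a k = (\sum_(k < K.+1) th k * a k) / W.
  by rewrite mulr_suml; apply: eq_bigr => k _; rewrite mulrAC.
rewrite -/th -/W e.
have Ka0 : 0 < (K.+1%:R : R) `^ al by rewrite powR_gt0 // ltr0n.
have hab := abel0 th0 thi hA K.+1.
have hdiv := sum_pow_div K.+1 al1.
have hc := sum_combine K.+1 th0 hs.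
have hW := sum_powR_lb K.+1 al1.
have W0 : 0 < W.
  rewrite /W big_ord_recl /=; apply: lt_le_trans (_ : 0 < th 0%N) _.
    by rewrite /th powR_gt0.
  by rewrite lerDl sumr_ge0.
apply: (final_aux W0 (_ : 0 < K.+1%:R) Ka0 r0 e0 D0 _ _ _ hK).
- by rewrite ltr0n.
- lra.
- have h1 : 32 * (\sum_(k < K.+1) th k * (A k - A k.+1)) <= 32 * ((K.+1%:R) `^ al * D2).
    by rewrite ler_wpM2l.
  have h2 : 4 * D2 * (\sum_(k < K.+1) th k / k.+1%:R) <= 4 * D2 * (K.+1%:R) `^ al.
    by rewrite ler_wpM2l // mulr_ge0.
  move: hc h1 h2.
  move: (\sum_(k < K.+1) th k * a k) (\sum_(k < K.+1) th k * (A k - A k.+1)) (\sum_(k < K.+1) th k / k.+1%:R) => x y z.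
  move: ((K.+1%:R : R) `^ al) => P.
  have -> : 4 * D2 * P = 4 * (P * D2) by ring.
  move: (P * D2) => Q. lra.
- have e2 : (K.+1%:R : R) `^ (al + 1) = K.+1%:R * (K.+1%:R) `^ al.
    by rewrite powRD ?powRr1 ?ler0n 1?mulrC //; apply/implyP => _; rewrite pnatr_eq0.
  by rewrite -e2.
Qed.

Lemma dist_sum (K : nat) (pr : nat -> R) (d : nat -> \bar R) (a : nat -> R) (c bound : R) :
  (forall k, 0 <= pr k) -> (forall k, (d k <= (c * a k)%:E)%E) ->
  \sum_(k < K) pr k * a k <= bound -> 0 <= c ->
  (\sum_(k < K) (pr k)%:E * d k <= (c * bound)%:E)%E.
Proof.
move=> pr0 hd hs c0.
apply: (@le_trans _ _ (\sum_(k < K) ((pr k)%:E * (c * a k)%:E))%E).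
  by apply: lee_sum => k _; apply: lee_wpmul2l => //; rewrite lee_fin.
rewrite (_ : (\sum_(k < K) ((pr k)%:E * (c * a k)%:E))%E = (\sum_(k < K) c * (pr k * a k))%:E); last first.
  by rewrite -sumEFin; apply: eq_bigr => k _; rewrite -EFinM; congr (_%:E); ring.
by rewrite lee_fin -mulr_sumr ler_wpM2l.
Qed.
End Final.
Section Vec2.
Variable R : realType.
Variable n : nat.
Implicit Types u w s x y z : 'rV[R]_n.

Lemma expand3 x y z : dotv (x - z) (x - z) =
  dotv (x - y) (x - y) + 2 * dotv (x - y) (y - z) + dotv (y - z) (y - z).
Proof.
have -> : x - z = (x - y) + (y - z) by apply/rowP => i; rewrite !mxE; ring.
exact: dotv_expand.
Qed.

Lemma sum_sq_le u w s : 0 <= dotv (w - u) (s - w) ->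
  dotv (u - w) (u - w) + dotv (w - s) (w - s) <= dotv (u - s) (u - s).
Proof.
move=> h; rewrite (expand3 u w s).
have -> : dotv (u - w) (w - s) = dotv (w - u) (s - w).
  have -> : u - w = - (w - u) by rewrite opprB.
  have -> : w - s = - (s - w) by rewrite opprB.
  by rewrite dotvNl dotvNr opprK.
move: (dotv (u - w) (u - w)) (dotv (w - s) (w - s)) (dotv (w - u) (s - w)) h => a b c h.
lra.
Qed.

Lemma Gdiff (F : 'rV[R]_n -> 'rV[R]_n) (c : R) w z z' :
  (F z + c *: (z - w)) - (F z' + c *: (z' - w)) = (F z - F z') + c *: (z - z').
Proof. by apply/rowP => i; rewrite !mxE; ring. Qed.

Lemma smon_aux (F : 'rV[R]_n -> 'rV[R]_n) (rho : R) w z z' :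
  - rho * enorm (z - z') ^+ 2 <= dotv (F z - F z') (z - z') ->
  rho * dotv (z - z') (z - z') <=
  dotv ((F z + (2 * rho) *: (z - w)) - (F z' + (2 * rho) *: (z' - w))) (z - z').
Proof.
rewrite Gdiff [dotv (_ + _ *: _) _]dotvDl dotvZl enorm_sq.
move: (dotv (z - z') (z - z')) (dotv (F z - F z') (z - z')) => a b h.
lra.
Qed.

Lemma lip_aux2 (F : 'rV[R]_n -> 'rV[R]_n) (rho L : R) w z z' :
  0 < rho -> 0 < L ->
  enorm (F z - F z') <= L * enorm (z - z') ->
  dotv ((F z + (2 * rho) *: (z - w)) - (F z' + (2 * rho) *: (z' - w)))
       ((F z + (2 * rho) *: (z - w)) - (F z' + (2 * rho) *: (z' - w)))
  <= (L + 2 * rho) ^+ 2 * dotv (z - z') (z - z').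
Proof.
move=> r0 L0 h.
rewrite Gdiff -!enorm_sq.
have h1 := enormD (F z - F z') ((2 * rho) *: (z - z')).
rewrite enormZ ger0_norm in h1; last by apply: mulr_ge0 => //; exact: ltW.
have h2 : enorm (F z - F z' + (2 * rho) *: (z - z')) <= (L + 2 * rho) * enorm (z - z').
  move: h1 h; move: (enorm (F z - F z' + (2 * rho) *: (z - z'))) (enorm (F z - F z')) (enorm (z - z')) => a b c.
  rewrite mulrDl; lra.
rewrite -exprMn; apply: lerXn2r => //; rewrite nnegrE ?enorm_ge0 //.
by rewrite mulr_ge0 ?enorm_ge0 //; lra.
Qed.
End Vec2.
Section Main2.
Variable R : realType.

Lemma dotv0r n (u : 'rV[R]_n) : dotv u 0 = 0.
Proof. by rewrite dotvC dotv0l. Qed.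

Lemma stepk_abs n (u u1 w s : 'rV[R]_n) (D2 kk : R) :
  0 <= dotv (w - u) (s - w) ->
  dotv (u1 - w) (u1 - w) <= (32 * kk)^-1 * dotv (u - w) (u - w) ->
  dotv (w - s) (w - s) <= D2 -> 1 <= kk ->
  23 * dotv (u - w) (u - w) <= 32 * (dotv (u - s) (u - s) - dotv (u1 - s) (u1 - s)) + 4 * (D2 / kk).
Proof.
move=> hm hNd hB k1.
have k0 : 0 < 8 * kk by rewrite mulr_gt0 //; lra.
exact: (step_aux k1 (dotvv_ge0 _) (dotvv_ge0 _) (sum_sq_le hm) (expand3 u1 w s)
  (polar (u1 - w) (w - s) k0) hNd hB).
Qed.

Lemma zeta_norm n (Fv u w : 'rV[R]_n) (c : R) :
  enorm (Fv - (Fv + c *: (w - u))) ^+ 2 = c ^+ 2 * dotv (u - w) (u - w).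
Proof.
have -> : Fv - (Fv + c *: (w - u)) = c *: (u - w) by apply/rowP => i; rewrite !mxE; ring.
by rewrite enorm_sq dotvZl dotvZr mulrA -expr2.
Qed.

Lemma normal_l p q (X : set 'rV[R]_p) (Y : set 'rV[R]_q) (zb g : 'rV[R]_(p + q)) :
  (forall z', X (lsubmx z') /\ Y (rsubmx z') -> 0 <= dotv g (z' - zb)) ->
  Y (rsubmx zb) -> forall x', X x' -> 0 <= dotv (lsubmx g) (x' - lsubmx zb).
Proof.
move=> h Yb x' Xx'.
have := h (row_mx x' (rsubmx zb)); rewrite row_mxKl row_mxKr => /(_ (conj Xx' Yb)).
by rewrite dotv_split lsubB rsubB row_mxKl row_mxKr subrr dotv0r addr0.
Qed.

Lemma normal_r p q (X : set 'rV[R]_p) (Y : set 'rV[R]_q) (zb g : 'rV[R]_(p + q)) :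
  (forall z', X (lsubmx z') /\ Y (rsubmx z') -> 0 <= dotv g (z' - zb)) ->
  X (lsubmx zb) -> forall y', Y y' -> 0 <= dotv (rsubmx g) (y' - rsubmx zb).
Proof.
move=> h Xb y' Yy'.
have := h (row_mx (lsubmx zb) y'); rewrite row_mxKl row_mxKr => /(_ (conj Xb Yy')).
by rewrite dotv_split lsubB rsubB row_mxKl row_mxKr subrr dotv0r add0r.
Qed.
End Main2.
Unset Implicit Arguments.
Theorem corollary12 (R : realType) (p q : nat)
  (X : set 'rV[R]_p) (Y : set 'rV[R]_q) (D : R)
  (f : 'rV[R]_p -> 'rV[R]_q -> R) (F : 'rV[R]_(p + q) -> 'rV[R]_(p + q))
  (rho L alpha : R) (z0 : 'rV[R]_(p + q)) :
  let Z := [set z : 'rV[R]_(p + q) | X (lsubmx z) /\ Y (rsubmx z)] in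
  closed X -> convex_set X -> closed Y -> convex_set Y -> compact Z ->
  (forall z z', Z z -> Z z' -> enorm (z - z') <= D) ->
  {within Z, continuous (fun z : 'rV[R]_(p + q) => f (lsubmx z) (rsubmx z))} ->
  (* F = d_x f x d_y(-f), single-valued on Z *)
  (forall z, Z z -> forall zeta : 'rV[R]_(p + q),
     (fsub setT (fun x => f x (rsubmx z)) (lsubmx z) (lsubmx zeta) /\
      fsub setT (fun y => - f (lsubmx z) y) (rsubmx z) (rsubmx zeta))
     <-> zeta = F z) ->
  0 < rho ->
  (forall z z', Z z -> Z z' ->
     - rho * enorm (z - z') ^+ 2 <= dotv (F z - F z') (z - z')) ->
  0 < L ->
  (forall z z', Z z -> Z z' -> enorm (F z - F z') <= L * enorm (z - z')) ->
  (exists2 zs, Z zs & forall z, Z z -> 0 <= dotv (F z) (z - zs)) ->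
  1 <= alpha ->
  Z z0 ->
  let gamma := (2 * rho)^-1 in
  let theta := fun k : nat => (k.+1%:R) `^ alpha in
  let eta := fun k : nat => rho / (2 * (L + 2 * rho) ^+ 2) in
  let T := fun k : nat => ceiln (1 + 4 * (L + 2 * rho) ^+ 2 / rho ^+ 2 *
                 ln (8 * (L + 2 * rho) ^+ 2 * k.+1%:R / rho ^+ 2)) in
  let zk := ipp Z F gamma eta T z0 in
  let Fg := fun (w z : 'rV[R]_(p + q)) => F z + gamma^-1 *: (z - w) in
  let K := fun eps : R => ceiln (16 * rho ^+ 2 * D ^+ 2 * (alpha + 1) / eps ^+ 2) in
  let prob := fun (eps : R) (k : nat) =>
                theta k / \sum_(l < K eps) theta l in
  [/\ (forall k, exists w, svi Z (Fg (zk k)) w),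
      (forall zbar : nat -> 'rV[R]_(p + q),
         (forall k, svi Z (Fg (zk k)) (zbar k)) ->
         forall eps : R, 0 < eps ->
           \sum_(k < K eps) prob eps k * enorm (zk k - zbar k) ^+ 2
             <= gamma ^+ 2 * eps ^+ 2
           /\
           (\sum_(k < K eps) (prob eps k)%R%:E *
              dist2_0 [set zeta : 'rV[R]_(p + q) |
                 fsub X (fun x => f x (rsubmx (zbar k))) (lsubmx (zbar k))
                        (lsubmx zeta) /\
                 fsub Y (fun y => - f (lsubmx (zbar k)) y)%R (rsubmx (zbar k))
                        (rsubmx zeta)] <= (eps ^+ 2)%R%:E)%E)
    & (fun eps : R => (\sum_(k < K eps) T k)%:R : R)
        =O_ (at_right (0:R)) (fun eps : R => ln (eps^-1) * L ^+ 2 / eps ^+ 2)].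
Proof.
move=> Z cX cvX cY cvY cZ hD hf hF rho0 hmon L0 hlip [zs Zzs hzs] al1 Zz0.
move=> gamma theta eta T zk Fg K prob.
have ginv : gamma^-1 = 2 * rho by rewrite /gamma invrK.
have Zne : exists z, Z z by exists z0.
have Zcvx : forall x y (t : R), Z x -> Z y -> 0 <= t -> t <= 1 -> Z (t *: x + (1 - t) *: y).
  move=> x y t [Xx Yx] [Xy Yy] t0 t1; split.
    rewrite lsubD !lsubZ.
    have := cvX (lsubmx x) (lsubmx y) (Itv01 t0 t1) (mem_set Xx) (mem_set Xy).
    by rewrite in_setE.
  rewrite rsubD !rsubZ.
  have := cvY (rsubmx x) (rsubmx y) (Itv01 t0 t1) (mem_set Yx) (mem_set Yy).
  by rewrite in_setE.
have muL : rho <= L + 2 * rho by lra.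
have smonk : forall w z z', Z z -> Z z' ->
    rho * dotv (z - z') (z - z') <= dotv (Fg w z - Fg w z') (z - z').
  by move=> w z z' Zz Zz'; rewrite /Fg ginv; exact: smon_aux (hmon z z' Zz Zz').
have lipk : forall w z z', Z z -> Z z' ->
    dotv (Fg w z - Fg w z') (Fg w z - Fg w z') <= (L + 2 * rho) ^+ 2 * dotv (z - z') (z - z').
  by move=> w z z' Zz Zz'; rewrite /Fg ginv; exact: lip_aux2 rho0 L0 (hlip z z' Zz Zz').
have zkS : forall k, zk k.+1 =
    iter (T k) (fun z => Defs.proj Z (z - (rho / (2 * (L + 2 * rho) ^+ 2)) *: Fg (zk k) z)) (zk k).
  by [].
have zkZ : forall k, Z (zk k).
  elim => [|k IH] //; rewrite zkS; exact: iter_in.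
have svifix : forall k w, svi Z (Fg (zk k)) w <->
    (Z w /\ Defs.proj Z (w - (rho / (2 * (L + 2 * rho) ^+ 2)) *: Fg (zk k) w) = w).
  by move=> k w; exact: (svi_fixed Zne cZ Zcvx (Fg (zk k)) rho0 muL w).
split.
- move=> k.
  have [zb Zzb fb] := fixed_exists Zne cZ Zcvx rho0 muL (smonk (zk k)) (lipk (zk k)).
  by exists zb; apply/svifix.
- move=> zbar hzbar eps eps0.
  have Zb : forall k, Z (zbar k) by move=> k; exact: (hzbar k).1.
  have fixb : forall k, Defs.proj Z (zbar k - (rho / (2 * (L + 2 * rho) ^+ 2)) *: Fg (zk k) (zbar k)) = zbar k.
    by move=> k; exact: ((svifix k (zbar k)).1 (hzbar k)).2.
  have D0 : 0 <= D by exact: le_trans (enorm_ge0 _) (hD _ _ Zz0 Zz0).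
  have sqD : forall z z', Z z -> Z z' -> dotv (z - z') (z - z') <= D ^+ 2.
    move=> z z' Zz Zz'; rewrite -enorm_sq; apply: lerXn2r; rewrite ?nnegrE ?enorm_ge0 //.
    exact: hD.
  have mvi : forall k, 0 <= dotv (zbar k - zk k) (zs - zbar k).
    move=> k; have h1 := (hzbar k).2 zs Zzs.
    rewrite /Fg ginv dotvDl dotvZl in h1.
    have h2 := hzs (zbar k) (Zb k).
    have e : dotv (F (zbar k)) (zbar k - zs) = - dotv (F (zbar k)) (zs - zbar k).
      by rewrite -dotvNr opprB.
    rewrite e in h2.
    have : 0 <= 2 * rho * dotv (zbar k - zk k) (zs - zbar k).
      move: h1 h2; move: (dotv (F (zbar k)) (zs - zbar k)) (2 * rho * dotv (zbar k - zk k) (zs - zbar k)) => x y.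
      lra.
    by rewrite pmulr_rge0 // mulr_gt0 //; lra.
  have hNd : forall k, dotv (zk k.+1 - zbar k) (zk k.+1 - zbar k) <=
      (32 * k.+1%:R)^-1 * dotv (zk k - zbar k) (zk k - zbar k).
    move=> k; rewrite zkS.
    have h := iter_contr Zne cZ Zcvx rho0 muL (smonk (zk k)) (lipk (zk k)) (T k) (zkZ k) (Zb k) (fixb k).
    apply: le_trans h _; apply: ler_wpM2r; first exact: dotvv_ge0.
    exact: cT_bound rho L k rho0 L0.
  have stepk : forall k, 23 * dotv (zk k - zbar k) (zk k - zbar k) <=
      32 * (dotv (zk k - zs) (zk k - zs) - dotv (zk k.+1 - zs) (zk k.+1 - zs)) + 4 * (D ^+ 2 / k.+1%:R).
    move=> k; have k1 : (1 : R) <= k.+1%:R by rewrite ler1n.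
    exact: stepk_abs (mvi k) (hNd k) (sqD _ _ (Zb k) Zzs) k1.
  have hA : forall k, 0 <= dotv (zk k - zs) (zk k - zs) <= D ^+ 2.
    by move=> k; rewrite dotvv_ge0 /=; exact: sqD.
  have hK : 16 * rho ^+ 2 * D ^+ 2 * (alpha + 1) / eps ^+ 2 <= (K eps)%:R.
    apply: ceiln_ge; apply: divr_ge0; last exact: sqr_ge0.
    apply: mulr_ge0; last lra.
    apply: mulr_ge0; last exact: sqr_ge0.
    apply: mulr_ge0; [lra | exact: sqr_ge0].
  have part1 : \sum_(k < K eps) prob eps k * dotv (zk k - zbar k) (zk k - zbar k) <= gamma ^+ 2 * eps ^+ 2.
    exact: (@final2 R (K eps) (fun k => dotv (zk k - zbar k) (zk k - zbar k))
      (fun k => dotv (zk k - zs) (zk k - zs)) _ _ _ _ al1 rho0 eps0 (sqr_ge0 D) hA stepk hK).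
  split.
    by under eq_bigr => k _ do rewrite enorm_sq.
  have e : (eps ^+ 2)%:E = ((4 * rho ^+ 2) * (gamma ^+ 2 * eps ^+ 2))%:E.
    by congr (_%:E); rewrite /gamma; field; rewrite gt_eqF.
  rewrite e.
  apply: (@dist_sum R (K eps) (prob eps) (fun k => dist2_0 [set zeta : 'rV[R]_(p + q) |
                 fsub X (fun x => f x (rsubmx (zbar k))) (lsubmx (zbar k))
                        (lsubmx zeta) /\
                 fsub Y (fun y => - f (lsubmx (zbar k)) y)%R (rsubmx (zbar k))
                        (rsubmx zeta)]) (fun k => dotv (zk k - zbar k) (zk k - zbar k))
     (4 * rho ^+ 2) (gamma ^+ 2 * eps ^+ 2)).
  - move=> k; apply: divr_ge0; [exact: powR_ge0 | apply: sumr_ge0 => l _; exact: powR_ge0].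
  - move=> k; apply: ge_ereal_inf.
    exists ((enorm (F (zbar k) - Fg (zk k) (zbar k))) ^+ 2)%:E.
      exists (F (zbar k) - Fg (zk k) (zbar k)) => //; split.
      + rewrite lsubB; apply: fsub_normal.
        * exact: (Zb k).1.
        * exact: ((hF (zbar k) (Zb k) (F (zbar k))).2 erefl).1.
        * exact: (normal_l (hzbar k).2 (Zb k).2).
      + rewrite rsubB; apply: fsub_normal.
        * exact: (Zb k).2.
        * exact: ((hF (zbar k) (Zb k) (F (zbar k))).2 erefl).2.
        * exact: (normal_r (hzbar k).2 (Zb k).1).
    rewrite /Fg zeta_norm ginv lee_fin.
    by have -> : (2 * rho) ^+ 2 = 4 * rho ^+ 2 by ring.
  - exact: part1.
  - by rewrite mulr_ge0 // sqr_ge0.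
- exact: bigO_aux.
Qed.
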